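(* There exist $p,k,E$ and source covariance matrices $\Sigma_1,\dots,\Sigma_E$ such that every matrix $V^{\mathrm{seq}}=[v_1,\dots,v_k]$ produced by the sequential procedure $v_1\in\arg\max_{\|v\|=1}\min_{e\in\mathcal{E}}\mathcal{L}_{\mathrm{normVar}}(v;\Sigma_e)$, and for $2\le j\le k$, $v_j\in\arg\max\{\min_{e}\mathcal{L}_{\mathrm{normVar}}([v_1,\dots,v_{j-1},v];\Sigma_e): \|v\|=1,\ v\perp v_i\ \forall i<j\}$, fails to solve rank-$k$ norm-minPCA.
   Context: $\mathcal{O}_{p\times k}=\{V\in\mathbb{R}^{p\times k}:V^\top V=I_k\}$; source domains $\mathcal{E}=\{1,\dots,E\}$ with symmetric positive semidefinite covariances $\Sigma_e$ of positive trace. $\mathcal{L}_{\mathrm{normVar}}(V;\Sigma)=\operatorname{Tr}(V^\top\Sigma V)/\operatorname{Tr}(\Sigma)$. $V^*$ solves rank-$k$ norm-minPCA if $V^*\in\arg\max_{V\in\mathcal{O}_{p\times k}}\min_{e\in\mathcal{E}}\mathcal{L}_{\mathrm{normVar}}(V;\Sigma_e)$. *)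

(* Defs.v *)
From HB Require Import structures.
From mathcomp Require Import all_boot all_order all_algebra.
From mathcomp Require Import Rstruct.
Set Implicit Arguments. Unset Strict Implicit. Unset Printing Implicit Defensive.
Import Order.TTheory GRing.Theory Num.Theory.
Local Open Scope ring_scope.

Notation Rl := Rdefinitions.R (only parsing).

Definition orthonormal (p k : nat) (V : 'M[Rl]_(p, k)) : Prop :=
  V^T *m V = 1%:M.

Definition covariance (p : nat) (S : 'M[Rl]_p) : Prop :=
  S^T = S /\ (forall x : 'cV[Rl]_p, 0 <= (x^T *m S *m x) 0 0) /\ 0 < \tr S.

Definition normVar (p k : nat) (V : 'M[Rl]_(p, k)) (S : 'M[Rl]_p) : Rl :=
  \tr (V^T *m S *m V) / \tr S.

Definition minLoss (p k E : nat) (Sigma : 'I_E.+1 -> 'M[Rl]_p)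
  (V : 'M[Rl]_(p, k)) : Rl :=
  \big[Num.min/ normVar V (Sigma ord0)]_(e < E.+1) normVar V (Sigma e).

Definition solves_minPCA (p k E : nat) (Sigma : 'I_E.+1 -> 'M[Rl]_p)
  (V : 'M[Rl]_(p, k)) : Prop :=
  orthonormal V /\
  forall W : 'M[Rl]_(p, k), orthonormal W -> minLoss Sigma W <= minLoss Sigma V.

Definition firstcols (p k j : nat) (hj : (j < k)%N) (V : 'M[Rl]_(p, k)) : 'M[Rl]_(p, j) :=
  colsub (fun i : 'I_j => Ordinal (ltn_trans (ltn_ord i) hj)) V.

(* V = [v_1, ..., v_k] is a possible output of the sequential procedure:
   for every (0-indexed) step j < k, with W = [v_1..v_j] and v = v_{j+1},
   v is a unit vector orthogonal to the columns of W, and maximizes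
   u |-> min_e L([W, u]; Sigma_e) over unit u orthogonal to the columns of W. *)
Definition sequential (p k E : nat) (Sigma : 'I_E.+1 -> 'M[Rl]_p)
  (V : 'M[Rl]_(p, k)) : Prop :=
  forall (j : nat) (hj : (j < k)%N),
    let W := firstcols hj V in
    let v := col (Ordinal hj) V in
    [/\ v^T *m v = 1%:M, W^T *m v = 0 &
     forall u : 'cV[Rl]_p, u^T *m u = 1%:M -> W^T *m u = 0 ->
       minLoss Sigma (row_mx W u) <= minLoss Sigma (row_mx W v)].

(* Main.v *)
Require Import Defs.
From HB Require Import structures.
From mathcomp Require Import all_boot all_order all_algebra.
From mathcomp Require Import Rstruct ring lra.
Import Order.TTheory GRing.Theory Num.Theory.
Local Open Scope ring_scope.

Lemma trD (n : nat) (e : 'I_3) (M : 'M[Rl]_(3, n)) :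
  \tr (M^T *m delta_mx e e *m M) = \sum_j M e j ^+ 2.
Proof.
rewrite -(mul_delta_mx (0 : 'I_1)) -!mulmxA -rowE mulmxA.
rewrite -[delta_mx e 0](trmxK) trmx_delta -trmx_mul -rowE mxtrace_mulC.
rewrite /mxtrace big_ord1 !mxE; apply: eq_bigr => j _; rewrite !mxE expr2.
done.
Qed.

Lemma trdelta (e : 'I_3) : \tr (delta_mx e e : 'M[Rl]_3) = 1.
Proof.
rewrite /mxtrace (bigD1 e) //= big1 ?mxE ?eqxx ?addr0 // => i ne.
by rewrite mxE (negbTE ne).
Qed.
Definition Sig (e : 'I_3) : 'M[Rl]_3 := delta_mx e e.

Lemma nvS n (M : 'M[Rl]_(3,n)) e : normVar M (Sig e) = \sum_j M e j ^+ 2.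
Proof. by rewrite /normVar /Sig trD trdelta divr1. Qed.

Lemma minLoss_le n (M : 'M[Rl]_(3,n)) e : minLoss (E:=2) Sig M <= normVar M (Sig e).
Proof.
rewrite /minLoss (bigD1 e) //= ge_min lexx //.
Qed.

Lemma minLoss_ge n (M : 'M[Rl]_(3,n)) c :
  (forall e, c <= normVar M (Sig e)) -> c <= minLoss (E:=2) Sig M.
Proof.
move=> H; rewrite /minLoss; apply: (big_ind (fun x => c <= x)) => //.
by move=> x y hx hy; rewrite le_min hx hy.
Qed.

Definition i0 : 'I_3 := Ordinal (isT : (0 < 3)%N).
Definition i1 : 'I_3 := Ordinal (isT : (1 < 3)%N).
Definition i2 : 'I_3 := Ordinal (isT : (2 < 3)%N).
Lemma sum3 (F : 'I_3 -> Rl) : \sum_i F i = F i0 + F i1 + F i2.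
Proof.
rewrite !big_ord_recr big_ord0 /= add0r; congr (_ + _ + _); congr F; exact: val_inj.
Qed.
Lemma all3 (P : 'I_3 -> Prop) : P i0 -> P i1 -> P i2 -> forall i, P i.
Proof.
move=> h0 h1 h2 [[|[|[|m]]] hm] //.
- by rewrite (_ : Ordinal hm = i0) //; apply: val_inj.
- by rewrite (_ : Ordinal hm = i1) //; apply: val_inj.
- by rewrite (_ : Ordinal hm = i2) //; apply: val_inj.
Qed.
Definition j0 : 'I_2 := Ordinal (isT : (0 < 2)%N).
Definition j1 : 'I_2 := Ordinal (isT : (1 < 2)%N).
Lemma sum2 (F : 'I_2 -> Rl) : \sum_i F i = F j0 + F j1.
Proof.
rewrite !big_ord_recr big_ord0 /= add0r; congr (_ + _); congr F; exact: val_inj.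
Qed.
Lemma all2 (P : 'I_2 -> Prop) : P j0 -> P j1 -> forall i, P i.
Proof.
move=> h0 h1 [[|[|m]] hm] //.
- by rewrite (_ : Ordinal hm = j0) //; apply: val_inj.
- by rewrite (_ : Ordinal hm = j1) //; apply: val_inj.
Qed.

Lemma keyw2 {w0 w1 w2 : Rl} : 0 <= w0 * w1 ->
  2/27 <= w0^+2 -> 2/27 <= w1^+2 -> w0 + w1 + w2 = 0 -> w0^+2+w1^+2+w2^+2 = 1/3 -> False.
Proof.
move=> p h0 h1 hs hq.
have hw2 : w2 = - (w0 + w1) by lra.
have pp : (2/27) * (2/27) <= (w0 * w1)^+2.
  rewrite exprMn; apply: ler_pM => //; lra.
have q : 2/27 <= w0 * w1.
  case: (lerP (2/27) (w0 * w1)) => // lt.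
  have : (w0 * w1)^+2 < (2/27) * (2/27).
    by rewrite expr2; apply: ltr_pM.
  lra.
have : w0^+2 + w1^+2 + w0 * w1 = 1/6.
  have : w0^+2+w1^+2+w2^+2 = 2 * (w0^+2 + w1^+2 + w0 * w1) by rewrite hw2; ring.
  lra.
lra.
Qed.

Lemma keyw {w0 w1 w2 : Rl} :
  2/27 <= w0^+2 -> 2/27 <= w1^+2 -> 2/27 <= w2^+2 -> w0 + w1 + w2 = 0 -> w0^+2+w1^+2+w2^+2 = 1/3 -> False.
Proof.
move=> h0 h1 h2 hs hq.
case: (lerP 0 (w0 * w1)) => p01; first exact: (keyw2 p01 h0 h1 hs hq).
case: (lerP 0 (w0 * w2)) => p02.
  by apply: (@keyw2 w0 w2 w1 p02 h0 h2); rewrite addrAC ?hs ?hq.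
case: (lerP 0 (w1 * w2)) => p12.
  by apply: (@keyw2 w1 w2 w0 p12 h1 h2); rewrite addrC addrA ?hs ?hq.
have : 0 <= (w0 * w1) * (w0 * w2) * (w1 * w2).
  have -> : (w0 * w1) * (w0 * w2) * (w1 * w2) = (w0 * w1 * w2) ^+ 2 by ring.
  exact: sqr_ge0.
have : 0 < (w0 * w1) * (w0 * w2) by rewrite nmulr_rgt0.
move=> a b; have c : (w0 * w1) * (w0 * w2) * (w1 * w2) < 0 by rewrite pmulr_rlt0.
by have := lt_le_trans c b; rewrite ltxx.
Qed.

Lemma key (a0 a1 a2 u0 u1 u2 : Rl) :
  1/3 <= a0^+2 -> 1/3 <= a1^+2 -> 1/3 <= a2^+2 -> a0^+2 + a1^+2 + a2^+2 = 1 ->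
  a0 * u0 + a1 * u1 + a2 * u2 = 0 -> u0^+2+u1^+2+u2^+2 = 1 ->
  5/9 <= a0^+2 + u0^+2 -> 5/9 <= a1^+2 + u1^+2 -> 5/9 <= a2^+2 + u2^+2 -> False.
Proof.
move=> h0 h1 h2 hs ho hu g0 g1 g2.
have e0 : a0^+2 = 1/3 by lra.
have e1 : a1^+2 = 1/3 by lra.
have e2 : a2^+2 = 1/3 by lra.
apply: (keyw (w0 := a0 * u0) (w1 := a1 * u1) (w2 := a2 * u2)) => //;
  rewrite ?exprMn ?e0 ?e1 ?e2; lra.
Qed.

Lemma rs01 (W : 'M[Rl]_(3,0)) (v : 'cV[Rl]_3) e :
  \sum_(j < 0 + 1) (row_mx W v) e j ^+ 2 = v e 0 ^+ 2.
Proof.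
by rewrite big_split_ord /= big_ord0 add0r big_ord1 row_mxEr.
Qed.

Definition cW (i : 'I_3) (j : 'I_2) : Rl :=
  (nth 0 (if val j == 0%N then [:: 1; -2; 2] else [:: 2; -1; -2]) i) / 3.
Definition Wst : 'M[Rl]_(3,2) := \matrix_(i, j) cW i j.

Lemma Wst_orth : Defs.orthonormal Wst.
Proof.
rewrite /Defs.orthonormal; apply/matrixP => i j; rewrite !mxE.
under eq_bigr do rewrite !mxE.
rewrite sum3 /cW /=.
move: i j; apply: all2; apply: all2; rewrite /= ?mxE /=.
all: lra.
Qed.

Lemma Wst_loss : 5/9 <= minLoss (E:=2) Sig Wst.
Proof.
apply: minLoss_ge; apply: all3; rewrite nvS sum2 !mxE /cW /=; lra.
Qed.

Lemma cov_Sig e : covariance (Sig e).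
Proof.
split; first by rewrite /Sig trmx_delta.
split; last by rewrite /Sig trdelta ltr01.
move=> x.
have := trD _ e x; rewrite /mxtrace big_ord1 big_ord1 => ->; exact: sqr_ge0.
Qed.

Theorem mainTheorem5 :
  exists (p k E : nat) (Sigma : 'I_E.+1 -> 'M[Rl]_p),
    (0 < k)%N /\ (k <= p)%N /\
    (forall e, covariance (Sigma e)) /\
    forall V : 'M[Rl]_(p, k), sequential Sigma V -> ~ solves_minPCA Sigma V.
Proof.
exists 3%N, 2%N, 2%N, Sig; split => //; split => //; split; first exact: cov_Sig.
move=> V Hseq [_ Hopt].
have := Hopt _ Wst_orth.
have [h1 h2 h3] := Hseq 0%N isT.
have [g1 g2 g3] := Hseq 1%N isT.
set s : Rl := Num.sqrt (1/3).
have ss : s ^+ 2 = 1/3 by rewrite sqr_sqrtr //; lra.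
have hu : (const_mx s : 'cV[Rl]_3)^T *m const_mx s = 1%:M.
  apply/matrixP => i j; rewrite !ord1 !mxE sum3 !mxE -expr2 ss eqxx /=; lra.
have := h3 _ hu (flatmx0 _).
set L := minLoss _ (row_mx _ (col _ V)) => hL.
have hL1 : 1/3 <= L.
  apply: le_trans hL; apply: minLoss_ge => e'.
  by rewrite nvS rs01 mxE ss.
have ha : forall e, 1/3 <= V e j0 ^+ 2.
  move=> e; apply: (le_trans hL1); apply: le_trans (minLoss_le _ _ e) _.
  by rewrite nvS rs01 mxE.
have n1 := congr1 (fun M : 'M[Rl]_1 => M 0 0) h1.
rewrite /= !mxE sum3 !mxE eqxx /= -!expr2 in n1.
have n2 := congr1 (fun M : 'M[Rl]_1 => M 0 0) g1.
rewrite /= !mxE sum3 !mxE eqxx /= -!expr2 in n2.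
have n3 := congr1 (fun M : 'M[Rl]_1 => M 0 0) g2.
rewrite /= !mxE sum3 !mxE in n3.
have Ej : forall h, Ordinal (n:=2) (m:=0) h = j0 by move=> h; apply: val_inj.
rewrite !Ej in n3.
move=> hW; have hV := le_trans Wst_loss hW.
have hb : forall e, 5/9 <= V e j0 ^+ 2 + V e j1 ^+ 2.
  by move=> e; apply: (le_trans hV); rewrite (_ : V e j0 ^+ 2 + V e j1 ^+ 2 = normVar V (Sig e)); [exact: minLoss_le | by rewrite nvS sum2].
exact: (@key _ _ _ _ _ _ (ha i0) (ha i1) (ha i2) n1 n3 n2 (hb i0) (hb i1) (hb i2)).
Qed.
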